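(* Let $p\ge 3$ be an odd integer, $\mu\ge 0$ and $\alpha>0$. Then for any initial data $(x_0,x_1)\in\mathbb{R}^2$ there exists a unique global solution $x\in C^2([0,\infty))$ of the initial value problem \[ x''(t)+\mu x'(t)+\alpha x(t)^p=0,\quad t>0,\qquad x(0)=x_0,\ x'(0)=x_1. \] Moreover, if $\mu>0$, there exists a constant $C_*>0$ such that this solution satisfies \[ |x(t)|\le C_*\, t^{-\frac{1}{p-1}}\quad\text{for all } t>0. \] *)

(* Defs.v *)
From Stdlib Require Import Reals Lra Lia Arith.
Open Scope R_scope.

Definition deriv_nonneg (f f' : R -> R) : Prop :=
  forall t, 0 <= t -> forall eps, 0 < eps -> exists delta, 0 < delta /\
    forall s, 0 <= s -> s <> t -> Rabs (s - t) < delta ->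
      Rabs ((f s - f t) / (s - t) - f' t) < eps.

Definition cont_nonneg (g : R -> R) : Prop :=
  forall t, 0 <= t -> forall eps, 0 < eps -> exists delta, 0 < delta /\
    forall s, 0 <= s -> Rabs (s - t) < delta -> Rabs (g s - g t) < eps.

Definition is_solution (p : nat) (mu alpha x0 x1 : R) (x : R -> R) : Prop :=
  exists dx ddx : R -> R,
    deriv_nonneg x dx /\ deriv_nonneg dx ddx /\ cont_nonneg ddx /\
    (forall t, 0 < t -> ddx t + mu * dx t + alpha * (x t) ^ p = 0) /\
    x 0 = x0 /\ dx 0 = x1.

(* Main.v *)
Require Import Defs.
From Stdlib Require Import Reals Lra Lia Arith.
From Coquelicot Require Import Coquelicot.
Open Scope R_scope.

Lemma deriv_cont (f : R -> R) (x l : R) : is_derive f x l -> continuity_pt f x.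
Proof. intros H. apply continuity_pt_filterlim. apply (ex_derive_continuous (K:=R_AbsRing) (V:=R_NormedModule) f x). exists l; exact H. Qed.

Lemma exp_le_mono x y : x <= y -> exp x <= exp y.
Proof. intros H. destruct (Req_dec x y) as [->|]; [lra|]. apply Rlt_le, exp_increasing; lra. Qed.

Lemma mono_MVT (h h' : R -> R) a b : a <= b ->
  (forall s, a < s < b -> is_derive h s (h' s)) ->
  (forall s, a <= s <= b -> continuity_pt h s) ->
  (forall s, a < s < b -> 0 <= h' s) -> h a <= h b.
Proof.
  intros Hab Hd Hc Hp.
  destruct (Req_dec a b) as [->|Hne]; [lra|].
  assert (Hlt : a < b) by lra.
  set (pr1 := fun c (P : a < c < b) => exist (fun l => derivable_pt_abs h c l) (h' c)
          (proj1 (is_derive_Reals _ _ _) (Hd c P))).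
  set (pr2 := fun c (P : a < c < b) => exist (fun l => derivable_pt_abs id c l) 1
          (derivable_pt_lim_id c)).
  destruct (MVT h id a b pr1 pr2 Hlt Hc) as [c [P HP]].
  { intros c _. apply continuity_pt_id. }
  simpl in HP. unfold id in HP.
  specialize (Hp c P). nra.
Qed.

Lemma compare (f f' g g' : R -> R) t : 0 <= t ->
  (forall s, is_derive f s (f' s)) -> (forall s, is_derive g s (g' s)) ->
  (forall s, 0 <= s <= t -> Rabs (f' s) <= g' s) -> f 0 = 0 -> g 0 = 0 ->
  Rabs (f t) <= g t.
Proof.
  intros Ht Hf Hg Hb Hf0 Hg0.
  assert (H1 : (fun s => g s - f s) 0 <= (fun s => g s - f s) t).
  { apply (mono_MVT (fun s => g s - f s) (fun s => g' s - f' s) 0 t); auto.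
    - intros s _. apply (is_derive_minus g f s (g' s) (f' s)); auto.
    - intros s _. apply continuity_pt_minus; eapply deriv_cont; eauto.
    - intros s Hs. specialize (Hb s ltac:(lra)). apply Rabs_le_between in Hb. lra. }
  assert (H2 : (fun s => g s + f s) 0 <= (fun s => g s + f s) t).
  { apply (mono_MVT (fun s => g s + f s) (fun s => g' s + f' s) 0 t); auto.
    - intros s _. apply (is_derive_plus g f s (g' s) (f' s)); auto.
    - intros s _. apply continuity_pt_plus; eapply deriv_cont; eauto.
    - intros s Hs. specialize (Hb s ltac:(lra)). apply Rabs_le_between in Hb. lra. }
  simpl in H1, H2. apply Rabs_le. lra.
Qed.

Lemma lipD (f f' : R -> R) C t s :
  (forall x, is_derive f x (f' x)) -> (forall x, Rabs (f' x) <= C) ->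
  Rabs (f t - f s) <= C * Rabs (t - s).
Proof.
  intros Hd Hb.
  destruct (MVT_gen f s t f') as [c [_ Hc]].
  - intros; auto.
  - intros; eapply deriv_cont; eauto.
  - rewrite Hc, Rabs_mult. apply Rmult_le_compat_r; [apply Rabs_pos|auto].
Qed.

Definition prim (c : R) (f : R -> R) (t : R) := c + RInt f 0 t.

Lemma cont_of (f : R -> R) x : continuity_pt f x -> continuous f x.
Proof. apply continuity_pt_filterlim. Qed.

Lemma prim_derive c (f : R -> R) t : (forall x, continuity_pt f x) ->
  is_derive (prim c f) t (f t).
Proof.
  intros Hc. unfold prim.
  assert (HI : is_derive (fun t => RInt f 0 t) t (f t)).
  { apply (is_derive_RInt f (fun t => RInt f 0 t) 0 t).
    apply filter_forall. intros b. apply (RInt_correct (V:=R_CompleteNormedModule)).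
      apply (ex_RInt_continuous (V:=R_CompleteNormedModule)). intros z _. apply cont_of, Hc.
    apply cont_of, Hc. }
  apply is_derive_Reals in HI. apply is_derive_Reals.
  replace (f t) with (0 + f t) by ring.
  apply (derivable_pt_lim_plus (fun _ => c) (fun t => RInt f 0 t)); auto.
  apply derivable_pt_lim_const.
Qed.

Lemma prim_0 c f : prim c f 0 = c.
Proof. unfold prim. rewrite RInt_point. unfold zero; simpl. ring. Qed.

Definition cl (M x : R) := Rmax (-M) (Rmin M x).

Lemma cl_lip M x y : Rabs (cl M x - cl M y) <= Rabs (x - y).
Proof.
  unfold cl, Rmax, Rmin; repeat destruct Rle_dec; unfold Rabs; repeat destruct Rcase_abs; lra.
Qed.

Lemma cl_bound M x : 0 <= M -> Rabs (cl M x) <= M.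
Proof.
  intros; unfold cl, Rmax, Rmin; repeat destruct Rle_dec; unfold Rabs; repeat destruct Rcase_abs; lra.
Qed.

Lemma cl_id M x : Rabs x <= M -> cl M x = x.
Proof.
  intros H; apply Rabs_le_between in H. unfold cl, Rmax, Rmin; repeat destruct Rle_dec; lra.
Qed.

Lemma cl_cont M x : continuity_pt (cl M) x.
Proof.
  intros eps Heps. exists eps. split; auto. intros y [_ Hy].
  simpl in *. unfold R_dist in *. eapply Rle_lt_trans; [apply cl_lip|auto].
Qed.

Lemma pow_cont (f : R -> R) n x : continuity_pt f x -> continuity_pt (fun y => f y ^ n) x.
Proof.
  intros H. induction n.
  - simpl. apply continuity_pt_const. intros a b; auto.
  - simpl. apply (continuity_pt_mult f (fun y => f y ^ n)); auto.
Qed.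

Lemma pow_lip u w M n : Rabs u <= M -> Rabs w <= M ->
  Rabs (u ^ n - w ^ n) <= INR n * M ^ (pred n) * Rabs (u - w).
Proof.
  intros Hu Hw. assert (HM : 0 <= M) by (pose proof (Rabs_pos u); lra).
  induction n.
  - simpl. rewrite Rminus_diag, Rabs_R0. lra.
  - replace (u ^ S n - w ^ S n) with (u * (u ^ n - w ^ n) + w ^ n * (u - w)) by (simpl; ring).
    eapply Rle_trans; [apply Rabs_triang|]. rewrite !Rabs_mult.
    assert (Hwn : Rabs w ^ n <= M ^ n) by (apply pow_incr; split; [apply Rabs_pos|auto]).
    rewrite <- RPow_abs.
    assert (A : Rabs u * Rabs (u ^ n - w ^ n) <= M * (INR n * M ^ pred n * Rabs (u - w))).
    { apply Rmult_le_compat; auto; apply Rabs_pos. }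
    assert (B : Rabs w ^ n * Rabs (u - w) <= M ^ n * Rabs (u - w)).
    { apply Rmult_le_compat_r; auto; apply Rabs_pos. }
    rewrite S_INR. simpl pred.
    destruct n.
    + simpl in *. lra.
    + replace (M * (INR (S n) * M ^ pred (S n) * Rabs (u - w))) with (INR (S n) * M ^ (S n) * Rabs (u - w)) in A by (simpl; ring).
      lra.
Qed.

Definition Gf p mu a M x v := - mu * cl M v - a * cl M x ^ p.

Lemma Gf_bound p mu a M x v : 0 <= mu -> 0 <= a -> 0 <= M ->
  Rabs (Gf p mu a M x v) <= mu * M + a * M ^ p.
Proof.
  intros Hmu Ha HM. unfold Gf.
  eapply Rle_trans; [apply Rabs_triang|]. rewrite ?Rabs_Ropp, ?Rabs_mult, ?Rabs_Ropp, (Rabs_right mu), (Rabs_right a) by lra.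
  rewrite <- RPow_abs.
  apply Rplus_le_compat; apply Rmult_le_compat_l; auto.
  - apply cl_bound; auto.
  - apply pow_incr. split; [apply Rabs_pos|apply cl_bound; auto].
Qed.

Lemma Gf_lip p mu a M x v x' v' : 0 <= mu -> 0 <= a -> 0 <= M ->
  Rabs (Gf p mu a M x v - Gf p mu a M x' v') <=
  (mu + a * INR p * M ^ pred p) * (Rabs (x - x') + Rabs (v - v')).
Proof.
  intros Hmu Ha HM. unfold Gf.
  replace (- mu * cl M v - a * cl M x ^ p - (- mu * cl M v' - a * cl M x' ^ p))
    with (- (mu * (cl M v - cl M v')) - a * (cl M x ^ p - cl M x' ^ p)) by ring.
  eapply Rle_trans; [apply Rabs_triang|]. rewrite ?Rabs_Ropp, ?Rabs_mult, ?Rabs_Ropp, (Rabs_right mu), (Rabs_right a) by lra.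
  pose proof (cl_lip M v v'). pose proof (cl_lip M x x').
  pose proof (pow_lip (cl M x) (cl M x') M p (cl_bound M x HM) (cl_bound M x' HM)) as HPL.
  assert (0 <= INR p) by apply pos_INR.
  assert (0 <= M ^ pred p) by (apply pow_le; auto).
  assert (0 <= a * INR p * M ^ pred p) by (repeat apply Rmult_le_pos; auto).
  pose proof (Rabs_pos (x - x')). pose proof (Rabs_pos (v - v')).
  assert (mu * Rabs (cl M v - cl M v') <= mu * Rabs (v - v')) by (apply Rmult_le_compat_l; auto).
  assert (a * Rabs (cl M x ^ p - cl M x' ^ p) <= a * (INR p * M ^ pred p * Rabs (x - x'))) by (apply Rmult_le_compat_l; [lra| eapply Rle_trans; [exact HPL|]; apply Rmult_le_compat_l; [apply Rmult_le_pos; auto|auto]]).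
  assert (0 <= mu * Rabs (x - x')) by (apply Rmult_le_pos; auto).
  assert (0 <= a * INR p * M ^ pred p * Rabs (v - v')) by (apply Rmult_le_pos; auto).
  replace (a * (INR p * M ^ pred p * Rabs (x - x'))) with (a * INR p * M ^ pred p * Rabs (x - x')) in * by ring.
  rewrite Rmult_plus_distr_r, !Rmult_plus_distr_l. lra.
Qed.

Lemma Gf_cont p mu a M (X V : R -> R) t : continuity_pt X t -> continuity_pt V t ->
  continuity_pt (fun s => Gf p mu a M (X s) (V s)) t.
Proof.
  intros HX HV. unfold Gf.
  apply (continuity_pt_minus (fun s => - mu * cl M (V s)) (fun s => a * cl M (X s) ^ p)).
  - apply (continuity_pt_mult (fun _ => - mu) (fun s => cl M (V s))).
    + apply continuity_pt_const. intros ? ?; auto.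
    + apply (continuity_pt_comp V (cl M)); auto. apply cl_cont.
  - apply (continuity_pt_mult (fun _ => a) (fun s => cl M (X s) ^ p)).
    + apply continuity_pt_const. intros ? ?; auto.
    + apply (pow_cont (fun s => cl M (X s))).
      apply (continuity_pt_comp X (cl M)); auto. apply cl_cont.
Qed.

Fixpoint pic p mu a M x0 x1 (n : nat) : (R -> R) * (R -> R) :=
  match n with
  | O => (fun _ => x0, fun _ => x1)
  | S n => let XV := pic p mu a M x0 x1 n in
      (prim x0 (fun s => cl M (snd XV s)),
       prim x1 (fun s => Gf p mu a M (fst XV s) (snd XV s)))
  end.

Lemma pic_cont p mu a M x0 x1 n : forall t,
  continuity_pt (fst (pic p mu a M x0 x1 n)) t /\ continuity_pt (snd (pic p mu a M x0 x1 n)) t.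
Proof.
  induction n; intros t.
  - simpl. split; apply continuity_pt_const; intros ? ?; auto.
  - simpl. split.
    + eapply deriv_cont. apply prim_derive. intros x.
      apply (continuity_pt_comp (snd (pic p mu a M x0 x1 n)) (cl M)); [apply IHn|apply cl_cont].
    + eapply deriv_cont. apply prim_derive. intros x. apply Gf_cont; apply IHn.
Qed.

Lemma picX_der p mu a M x0 x1 n t :
  is_derive (fst (pic p mu a M x0 x1 (S n))) t (cl M (snd (pic p mu a M x0 x1 n) t)).
Proof.
  simpl. apply (prim_derive x0 (fun s => cl M (snd (pic p mu a M x0 x1 n) s))).
  intros x. apply (continuity_pt_comp (snd (pic p mu a M x0 x1 n)) (cl M)); [apply pic_cont|apply cl_cont].
Qed.

Lemma picV_der p mu a M x0 x1 n t :
  is_derive (snd (pic p mu a M x0 x1 (S n))) t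
    (Gf p mu a M (fst (pic p mu a M x0 x1 n) t) (snd (pic p mu a M x0 x1 n) t)).
Proof.
  simpl. apply (prim_derive x1 (fun s => Gf p mu a M (fst (pic p mu a M x0 x1 n) s) (snd (pic p mu a M x0 x1 n) s))).
  intros x. apply Gf_cont; apply pic_cont.
Qed.

Lemma pic_0 p mu a M x0 x1 n :
  fst (pic p mu a M x0 x1 n) 0 = x0 /\ snd (pic p mu a M x0 x1 n) 0 = x1.
Proof. destruct n; simpl; auto. rewrite !prim_0; auto. Qed.

Lemma der_minus (f g : R -> R) t a b : is_derive f t a -> is_derive g t b ->
  is_derive (fun s => f s - g s) t (a - b).
Proof.
  intros H1 H2. apply is_derive_Reals in H1, H2. apply is_derive_Reals.
  apply (derivable_pt_lim_minus f g); auto.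
Qed.

Lemma der_const (c t : R) : is_derive (fun _ => c) t 0.
Proof. apply is_derive_Reals. apply derivable_pt_lim_const. Qed.

Lemma der_g C K s : 0 < K ->
  is_derive (fun s => C * (exp (2 * K * s) - 1) / (2 * K)) s (C * exp (2 * K * s)).
Proof. intros HK. auto_derive; auto. field. lra. Qed.

Definition LL p mu a M := mu + a * INR p * M ^ pred p.
Definition KK p mu a M := 1 + LL p mu a M.
Definition BB p mu a M := mu * M + a * M ^ p.
Definition AA p mu a M := M + BB p mu a M.

Lemma LL_pos p mu a M : 0 <= mu -> 0 <= a -> 0 <= M -> 0 <= LL p mu a M.
Proof.
  intros. unfold LL. pose proof (pos_INR p). pose proof (pow_le M (pred p) ltac:(auto)).
  assert (0 <= a * INR p * M ^ pred p) by (repeat apply Rmult_le_pos; auto). lra.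
Qed.

Lemma BB_pos p mu a M : 0 <= mu -> 0 <= a -> 0 <= M -> 0 <= BB p mu a M.
Proof.
  intros. unfold BB. pose proof (pow_le M p ltac:(auto)).
  assert (0 <= a * M ^ p) by (repeat apply Rmult_le_pos; auto).
  assert (0 <= mu * M) by (repeat apply Rmult_le_pos; auto). lra.
Qed.

Lemma est p mu a M x0 x1 n t : 0 <= mu -> 0 <= a -> 0 <= M -> 0 <= t ->
  Rabs (fst (pic p mu a M x0 x1 (S n)) t - fst (pic p mu a M x0 x1 n) t) +
  Rabs (snd (pic p mu a M x0 x1 (S n)) t - snd (pic p mu a M x0 x1 n) t)
  <= AA p mu a M * (/2) ^ n * exp (2 * KK p mu a M * t).
Proof.
  intros Hmu Ha HM. revert t.
  pose proof (LL_pos p mu a M Hmu Ha HM) as HL.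
  pose proof (BB_pos p mu a M Hmu Ha HM) as HB.
  set (L := LL p mu a M) in *. set (K := KK p mu a M). set (B := BB p mu a M) in *.
  set (A := AA p mu a M).
  assert (HK : 1 <= K) by (unfold K, KK; fold L; lra).
  assert (HA : M <= A /\ B <= A) by (unfold A, AA; fold B; lra).
  set (X := fun n => fst (pic p mu a M x0 x1 n)).
  set (V := fun n => snd (pic p mu a M x0 x1 n)).
  change (forall t, 0 <= t -> Rabs (X (S n) t - X n t) + Rabs (V (S n) t - V n t) <= A * (/ 2) ^ n * exp (2 * K * t)).
  induction n; intros t Ht.
  - set (g := fun s => A * (/2)^0 * (exp (2 * K * s) - 1) / (2 * K)).
    assert (Hg : forall s, is_derive g s (A * (/2)^0 * exp (2 * K * s))) by (intros; apply der_g; lra).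
    assert (Hg0 : g 0 = 0) by (unfold g; rewrite Rmult_0_r, exp_0; field; lra).
    assert (H1 : Rabs (X 1%nat t - X 0%nat t) <= g t).
    { apply (compare (fun s => X 1%nat s - X 0%nat s) (fun s => cl M (V 0%nat s) - 0) g
        (fun s => A * (/2)^0 * exp (2 * K * s))); auto.
      - intros s. apply der_minus; [apply picX_der|unfold X; simpl; apply der_const].
      - intros s Hs. rewrite Rminus_0_r. simpl pow. rewrite Rmult_1_r.
        eapply Rle_trans; [apply cl_bound; auto|].
        assert (1 <= exp (2 * K * s)) by (pose proof (exp_ineq1_le (2*K*s)); nra).
        nra.
      - unfold X. destruct (pic_0 p mu a M x0 x1 1) as [-> _]. destruct (pic_0 p mu a M x0 x1 0) as [-> _]. ring. }
    assert (H2 : Rabs (V 1%nat t - V 0%nat t) <= g t).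
    { apply (compare (fun s => V 1%nat s - V 0%nat s) (fun s => Gf p mu a M (X 0%nat s) (V 0%nat s) - 0) g
        (fun s => A * (/2)^0 * exp (2 * K * s))); auto.
      - intros s. apply der_minus; [apply picV_der|unfold V; simpl; apply der_const].
      - intros s Hs. rewrite Rminus_0_r. simpl pow. rewrite Rmult_1_r.
        eapply Rle_trans; [apply Gf_bound; auto|]. fold (BB p mu a M). fold B.
        assert (1 <= exp (2 * K * s)) by (pose proof (exp_ineq1_le (2*K*s)); nra).
        nra.
      - unfold V. destruct (pic_0 p mu a M x0 x1 1) as [_ ->]. destruct (pic_0 p mu a M x0 x1 0) as [_ ->]. ring. }
    unfold g in H1, H2. simpl pow in *. 
    assert (0 < exp (2 * K * t)) by apply exp_pos.
    assert (A * 1 * (exp (2 * K * t) - 1) / (2 * K) <= A * 1 * exp (2 * K * t) / 2).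
    { unfold Rdiv. rewrite !Rmult_1_r.
      apply Rmult_le_compat; try lra.
      - assert (0 <= A) by lra. assert (1 <= exp (2 * K * t)) by (pose proof (exp_ineq1_le (2*K*t)); nra). nra.
      - apply Rlt_le, Rinv_pos; lra.
      - apply Rinv_le_contravar; lra. }
    lra.
  - set (C := A * (/2)^n).
    assert (HC : 0 <= C).
    { unfold C. apply Rmult_le_pos; [lra|]. apply pow_le. lra. }
    assert (H1 : Rabs (X (S (S n)) t - X (S n) t) <= C * (exp (2 * K * t) - 1) / (2 * K)).
    { apply (compare (fun s => X (S (S n)) s - X (S n) s) (fun s => cl M (V (S n) s) - cl M (V n s))
        (fun s => C * (exp (2 * K * s) - 1) / (2 * K)) (fun s => C * exp (2 * K * s))); auto.
      - intros s. apply der_minus; apply picX_der.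
      - intros s. apply der_g. lra.
      - intros s Hs. eapply Rle_trans; [apply cl_lip|].
        specialize (IHn s ltac:(lra)). pose proof (Rabs_pos (X (S n) s - X n s)). unfold C. lra.
      - unfold X. destruct (pic_0 p mu a M x0 x1 (S (S n))) as [-> _]. destruct (pic_0 p mu a M x0 x1 (S n)) as [-> _]. ring.
      - rewrite Rmult_0_r, exp_0. field. lra. }
    assert (H2 : Rabs (V (S (S n)) t - V (S n) t) <= (L * C) * (exp (2 * K * t) - 1) / (2 * K)).
    { apply (compare (fun s => V (S (S n)) s - V (S n) s)
        (fun s => Gf p mu a M (X (S n) s) (V (S n) s) - Gf p mu a M (X n s) (V n s))
        (fun s => (L * C) * (exp (2 * K * s) - 1) / (2 * K)) (fun s => (L * C) * exp (2 * K * s))); auto.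
      - intros s. apply der_minus; apply picV_der.
      - intros s. apply der_g. lra.
      - intros s Hs. eapply Rle_trans; [apply Gf_lip; auto|]. fold (LL p mu a M). fold L.
        specialize (IHn s ltac:(lra)). rewrite Rmult_assoc. apply Rmult_le_compat_l; auto.
      - unfold V. destruct (pic_0 p mu a M x0 x1 (S (S n))) as [_ ->]. destruct (pic_0 p mu a M x0 x1 (S n)) as [_ ->]. ring.
      - rewrite Rmult_0_r, exp_0. field. lra. }
    assert (E : C * (exp (2 * K * t) - 1) / (2 * K) + L * C * (exp (2 * K * t) - 1) / (2 * K)
       = A * (/2) ^ (S n) * (exp (2 * K * t) - 1)).
    { unfold C. simpl pow. unfold K, KK. fold L. field. lra. }
    assert (0 <= A * (/2) ^ (S n)) by (apply Rmult_le_pos; [lra|apply pow_le; lra]).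
    pose proof (exp_pos (2 * K * t)). nra.
Qed.

Lemma tail_small C eps : 0 <= C -> 0 < eps -> exists N, forall n, (N <= n)%nat -> C * (/2) ^ n < eps.
Proof.
  intros HC He.
  destruct (pow_lt_1_zero (/2) ltac:(rewrite Rabs_right; lra) (eps / (C + 1)) ltac:(apply Rdiv_lt_0_compat; lra)) as [N HN].
  exists N. intros n Hn. specialize (HN n Hn). rewrite Rabs_right in HN by (apply Rle_ge, pow_le; lra).
  assert (C * (/2)^n <= C * (eps / (C + 1))) by (apply Rmult_le_compat_l; lra).
  assert (C * (eps / (C + 1)) < eps).
  { assert (eps / (C + 1) * (C + 1) = eps) by (field; lra).
    assert (0 < eps / (C + 1)) by (apply Rdiv_lt_0_compat; lra). nra. }
  lra.
Qed.

Lemma zero_geom d C : 0 <= d -> 0 <= C -> (forall n, d <= C * (/2) ^ n) -> d = 0.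
Proof.
  intros Hd HC H. destruct (Req_dec d 0); auto.
  destruct (tail_small C d HC ltac:(lra)) as [N HN]. specialize (HN N (le_n N)). specialize (H N). lra.
Qed.

Lemma lip_cont (f : R -> R) C t : 0 <= C -> (forall s, Rabs (f s - f t) <= C * Rabs (s - t)) -> continuity_pt f t.
Proof.
  intros HC H eps Heps. exists (eps / (C + 1)). split; [apply Rdiv_lt_0_compat; lra|].
  intros y [_ Hy]. simpl in *. unfold R_dist in *.
  eapply Rle_lt_trans; [apply H|].
  apply (Rle_lt_trans _ (C * (eps / (C + 1)))).
  - apply Rmult_le_compat_l; lra.
  - assert (eps / (C + 1) * (C + 1) = eps) by (field; lra).
    assert (0 < eps / (C + 1)) by (apply Rdiv_lt_0_compat; lra). nra.
Qed.

Lemma exR (f : R -> R) a b : (forall x, continuity_pt f x) -> ex_RInt f a b.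
Proof. intros H. apply (ex_RInt_continuous (V:=R_CompleteNormedModule)). intros; apply cont_of, H. Qed.

Lemma RInt_minus_R (f g : R -> R) a b : ex_RInt f a b -> ex_RInt g a b ->
  RInt (fun x => f x - g x) a b = RInt f a b - RInt g a b.
Proof. intros H1 H2. exact (RInt_minus (V:=R_CompleteNormedModule) f g a b H1 H2). Qed.

Lemma cauchy p mu a M x0 x1 n k t : 0 <= mu -> 0 <= a -> 0 <= M -> 0 <= t ->
  Rabs (fst (pic p mu a M x0 x1 (n + k)) t - fst (pic p mu a M x0 x1 n) t) +
  Rabs (snd (pic p mu a M x0 x1 (n + k)) t - snd (pic p mu a M x0 x1 n) t)
  <= 2 * AA p mu a M * ((/2) ^ n - (/2) ^ (n + k)) * exp (2 * KK p mu a M * t).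
Proof.
  intros Hmu Ha HM Ht. induction k.
  - rewrite Nat.add_0_r, !Rminus_diag, Rabs_R0. lra.
  - pose proof (est p mu a M x0 x1 (n + k) t Hmu Ha HM Ht) as E.
    replace (n + S k)%nat with (S (n + k)) by lia.
    set (X := fun n => fst (pic p mu a M x0 x1 n)) in *.
    set (V := fun n => snd (pic p mu a M x0 x1 n)) in *.
    change (Rabs (X (S (n + k)) t - X n t) + Rabs (V (S (n + k)) t - V n t) <=
      2 * AA p mu a M * ((/ 2) ^ n - (/ 2) ^ S (n + k)) * exp (2 * KK p mu a M * t)).
    change (Rabs (X (n + k)%nat t - X n t) + Rabs (V (n + k)%nat t - V n t) <=
      2 * AA p mu a M * ((/ 2) ^ n - (/ 2) ^ (n + k)) * exp (2 * KK p mu a M * t)) in IHk.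
    change (Rabs (X (S (n + k)) t - X (n + k)%nat t) + Rabs (V (S (n + k)) t - V (n + k)%nat t)
       <= AA p mu a M * (/ 2) ^ (n + k) * exp (2 * KK p mu a M * t)) in E.
    pose proof (Rabs_triang (X (S (n + k)) t - X (n + k)%nat t) (X (n + k)%nat t - X n t)).
    pose proof (Rabs_triang (V (S (n + k)) t - V (n + k)%nat t) (V (n + k)%nat t - V n t)).
    replace (X (S (n + k)) t - X (n + k)%nat t + (X (n + k)%nat t - X n t)) with (X (S (n + k)) t - X n t) in * by ring.
    replace (V (S (n + k)) t - V (n + k)%nat t + (V (n + k)%nat t - V n t)) with (V (S (n + k)) t - V n t) in * by ring.
    simpl pow at 2.
    lra.
Qed.

Definition Xl p mu a M x0 x1 t := real (Lim_seq (fun n => fst (pic p mu a M x0 x1 n) (Rmax 0 t))).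
Definition Vl p mu a M x0 x1 t := real (Lim_seq (fun n => snd (pic p mu a M x0 x1 n) (Rmax 0 t))).

Lemma cauchy2 p mu a M x0 x1 n m t : 0 <= mu -> 0 <= a -> 0 <= M -> 0 <= t -> (n <= m)%nat ->
  Rabs (fst (pic p mu a M x0 x1 m) t - fst (pic p mu a M x0 x1 n) t) <= 2 * AA p mu a M * (/2) ^ n * exp (2 * KK p mu a M * t) /\
  Rabs (snd (pic p mu a M x0 x1 m) t - snd (pic p mu a M x0 x1 n) t) <= 2 * AA p mu a M * (/2) ^ n * exp (2 * KK p mu a M * t).
Proof.
  intros Hmu Ha HM Ht Hnm.
  replace m with (n + (m - n))%nat by lia.
  pose proof (cauchy p mu a M x0 x1 n (m - n) t Hmu Ha HM Ht) as H.
  pose proof (Rabs_pos (fst (pic p mu a M x0 x1 (n + (m - n))) t - fst (pic p mu a M x0 x1 n) t)).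
  pose proof (Rabs_pos (snd (pic p mu a M x0 x1 (n + (m - n))) t - snd (pic p mu a M x0 x1 n) t)).
  assert (0 <= 2 * AA p mu a M * (/2) ^ (n + (m - n)) * exp (2 * KK p mu a M * t)).
  { pose proof (BB_pos p mu a M Hmu Ha HM). unfold AA.
    repeat apply Rmult_le_pos; try lra. apply pow_le; lra. apply Rlt_le, exp_pos. }
  assert (E : 2 * AA p mu a M * ((/ 2) ^ n - (/ 2) ^ (n + (m - n))) * exp (2 * KK p mu a M * t)
    = 2 * AA p mu a M * (/2) ^ n * exp (2 * KK p mu a M * t) - 2 * AA p mu a M * (/2) ^ (n + (m - n)) * exp (2 * KK p mu a M * t)) by ring.
  lra.
Qed.

Lemma lims p mu a M x0 x1 t : 0 <= mu -> 0 <= a -> 0 <= M -> 0 <= t ->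
  is_lim_seq (fun n => fst (pic p mu a M x0 x1 n) t) (Xl p mu a M x0 x1 t) /\
  is_lim_seq (fun n => snd (pic p mu a M x0 x1 n) t) (Vl p mu a M x0 x1 t).
Proof.
  intros Hmu Ha HM Ht.
  unfold Xl, Vl. rewrite Rmax_right by lra.
  set (C := 4 * AA p mu a M * exp (2 * KK p mu a M * t)).
  assert (HC : 0 <= C).
  { pose proof (BB_pos p mu a M Hmu Ha HM). unfold C, AA.
    repeat apply Rmult_le_pos; try lra. apply Rlt_le, exp_pos. }
  split.
  - destruct (proj2 (ex_lim_seq_cauchy_corr (fun n => fst (pic p mu a M x0 x1 n) t))) as [l Hl].
    + intros eps. destruct (tail_small C eps HC (cond_pos eps)) as [N HN].
      exists N. intros n m Hn Hm.
      destruct (cauchy2 p mu a M x0 x1 N n t Hmu Ha HM Ht Hn) as [H1 _].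
      destruct (cauchy2 p mu a M x0 x1 N m t Hmu Ha HM Ht Hm) as [H2 _].
      specialize (HN N (le_n N)).
      pose proof (Rabs_triang (fst (pic p mu a M x0 x1 n) t - fst (pic p mu a M x0 x1 N) t)
                              (fst (pic p mu a M x0 x1 N) t - fst (pic p mu a M x0 x1 m) t)).
      rewrite (Rabs_minus_sym (fst (pic p mu a M x0 x1 N) t)) in H.
      replace (fst (pic p mu a M x0 x1 n) t - fst (pic p mu a M x0 x1 N) t +
        (fst (pic p mu a M x0 x1 N) t - fst (pic p mu a M x0 x1 m) t)) with
        (fst (pic p mu a M x0 x1 n) t - fst (pic p mu a M x0 x1 m) t) in H by ring.
      unfold C in HN. lra.
    + rewrite (is_lim_seq_unique _ _ Hl). simpl. exact Hl.
  - destruct (proj2 (ex_lim_seq_cauchy_corr (fun n => snd (pic p mu a M x0 x1 n) t))) as [l Hl].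
    + intros eps. destruct (tail_small C eps HC (cond_pos eps)) as [N HN].
      exists N. intros n m Hn Hm.
      destruct (cauchy2 p mu a M x0 x1 N n t Hmu Ha HM Ht Hn) as [_ H1].
      destruct (cauchy2 p mu a M x0 x1 N m t Hmu Ha HM Ht Hm) as [_ H2].
      specialize (HN N (le_n N)).
      pose proof (Rabs_triang (snd (pic p mu a M x0 x1 n) t - snd (pic p mu a M x0 x1 N) t)
                              (snd (pic p mu a M x0 x1 N) t - snd (pic p mu a M x0 x1 m) t)).
      rewrite (Rabs_minus_sym (snd (pic p mu a M x0 x1 N) t)) in H.
      replace (snd (pic p mu a M x0 x1 n) t - snd (pic p mu a M x0 x1 N) t +
        (snd (pic p mu a M x0 x1 N) t - snd (pic p mu a M x0 x1 m) t)) with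
        (snd (pic p mu a M x0 x1 n) t - snd (pic p mu a M x0 x1 m) t) in H by ring.
      unfold C in HN. lra.
    + rewrite (is_lim_seq_unique _ _ Hl). simpl. exact Hl.
Qed.

Lemma lim_le (u : nat -> R) (l c : R) : is_lim_seq u l -> (forall n, Rabs (u n) <= c) -> Rabs l <= c.
Proof.
  intros Hu Hb.
  pose proof (is_lim_seq_abs u l Hu) as Ha. simpl in Ha.
  pose proof (is_lim_seq_le _ _ _ _ Hb Ha (is_lim_seq_const c)). simpl in H. exact H.
Qed.

Lemma tails p mu a M x0 x1 n t : 0 <= mu -> 0 <= a -> 0 <= M -> 0 <= t ->
  Rabs (Xl p mu a M x0 x1 t - fst (pic p mu a M x0 x1 n) t) <= 2 * AA p mu a M * (/2) ^ n * exp (2 * KK p mu a M * t) /\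
  Rabs (Vl p mu a M x0 x1 t - snd (pic p mu a M x0 x1 n) t) <= 2 * AA p mu a M * (/2) ^ n * exp (2 * KK p mu a M * t).
Proof.
  intros Hmu Ha HM Ht. destruct (lims p mu a M x0 x1 t Hmu Ha HM Ht) as [HX HV].
  split.
  - apply (lim_le (fun k => fst (pic p mu a M x0 x1 (k + n)) t - fst (pic p mu a M x0 x1 n) t)).
    + apply (is_lim_seq_minus' _ _ (Xl p mu a M x0 x1 t)); [|apply is_lim_seq_const].
      apply (is_lim_seq_incr_n (fun k => fst (pic p mu a M x0 x1 k) t) n). exact HX.
    + intros k. apply (cauchy2 p mu a M x0 x1 n (k + n) t); auto. lia.
  - apply (lim_le (fun k => snd (pic p mu a M x0 x1 (k + n)) t - snd (pic p mu a M x0 x1 n) t)).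
    + apply (is_lim_seq_minus' _ _ (Vl p mu a M x0 x1 t)); [|apply is_lim_seq_const].
      apply (is_lim_seq_incr_n (fun k => snd (pic p mu a M x0 x1 k) t) n). exact HV.
    + intros k. apply (cauchy2 p mu a M x0 x1 n (k + n) t); auto. lia.
Qed.

Lemma Rmax0_lip t s : Rabs (Rmax 0 t - Rmax 0 s) <= Rabs (t - s).
Proof. unfold Rmax; repeat destruct Rle_dec; unfold Rabs; repeat destruct Rcase_abs; lra. Qed.

Lemma lipX p mu a M x0 x1 t s : 0 <= mu -> 0 <= a -> 0 <= M ->
  Rabs (Xl p mu a M x0 x1 t - Xl p mu a M x0 x1 s) <= M * Rabs (t - s) /\
  Rabs (Vl p mu a M x0 x1 t - Vl p mu a M x0 x1 s) <= BB p mu a M * Rabs (t - s).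
Proof.
  intros Hmu Ha HM.
  set (t' := Rmax 0 t). set (s' := Rmax 0 s).
  assert (Ht' : 0 <= t') by apply Rmax_l. assert (Hs' : 0 <= s') by apply Rmax_l.
  assert (EX : forall u, Xl p mu a M x0 x1 u = Xl p mu a M x0 x1 (Rmax 0 u)).
  { intros u. unfold Xl. rewrite (Rmax_right 0 (Rmax 0 u)) by apply Rmax_l. auto. }
  assert (EV : forall u, Vl p mu a M x0 x1 u = Vl p mu a M x0 x1 (Rmax 0 u)).
  { intros u. unfold Vl. rewrite (Rmax_right 0 (Rmax 0 u)) by apply Rmax_l. auto. }
  rewrite (EX t), (EX s), (EV t), (EV s). fold t' s'.
  pose proof (Rmax0_lip t s) as Hts. fold t' s' in Hts.
  destruct (lims p mu a M x0 x1 t' Hmu Ha HM Ht') as [HXt HVt].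
  destruct (lims p mu a M x0 x1 s' Hmu Ha HM Hs') as [HXs HVs].
  pose proof (BB_pos p mu a M Hmu Ha HM).
  split.
  - eapply Rle_trans; [|apply Rmult_le_compat_l; [exact HM| exact Hts]].
    apply (lim_le (fun k => fst (pic p mu a M x0 x1 (S k)) t' - fst (pic p mu a M x0 x1 (S k)) s')).
    + apply is_lim_seq_minus'; apply (is_lim_seq_incr_1 (fun k => fst (pic p mu a M x0 x1 k) _)); auto.
    + intros k. apply (lipD _ (fun x => cl M (snd (pic p mu a M x0 x1 k) x))).
      * intros; apply picX_der.
      * intros; apply cl_bound; auto.
  - eapply Rle_trans; [|apply Rmult_le_compat_l; [exact H| exact Hts]].
    apply (lim_le (fun k => snd (pic p mu a M x0 x1 (S k)) t' - snd (pic p mu a M x0 x1 (S k)) s')).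
    + apply is_lim_seq_minus'; apply (is_lim_seq_incr_1 (fun k => snd (pic p mu a M x0 x1 k) _)); auto.
    + intros k. apply (lipD _ (fun x => Gf p mu a M (fst (pic p mu a M x0 x1 k) x) (snd (pic p mu a M x0 x1 k) x))).
      * intros; apply picV_der.
      * intros; apply Gf_bound; auto.
Qed.

Lemma contXV p mu a M x0 x1 t : 0 <= mu -> 0 <= a -> 0 <= M ->
  continuity_pt (Xl p mu a M x0 x1) t /\ continuity_pt (Vl p mu a M x0 x1) t.
Proof.
  intros Hmu Ha HM. pose proof (BB_pos p mu a M Hmu Ha HM). split.
  - apply (lip_cont _ M); auto. intros s. apply lipX; auto.
  - apply (lip_cont _ (BB p mu a M)); auto. intros s. apply lipX; auto.
Qed.

Lemma ident p mu a M x0 x1 t : 0 <= mu -> 0 <= a -> 0 <= M -> 0 <= t ->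
  Xl p mu a M x0 x1 t = prim x0 (fun s => cl M (Vl p mu a M x0 x1 s)) t /\
  Vl p mu a M x0 x1 t = prim x1 (fun s => Gf p mu a M (Xl p mu a M x0 x1 s) (Vl p mu a M x0 x1 s)) t.
Proof.
  intros Hmu Ha HM Ht.
  pose proof (BB_pos p mu a M Hmu Ha HM) as HB.
  pose proof (LL_pos p mu a M Hmu Ha HM) as HL.
  set (A := AA p mu a M) in *. set (K := KK p mu a M) in *. set (L := LL p mu a M) in *.
  assert (HA : 0 <= A) by (unfold A, AA; lra).
  assert (HK : 0 <= K) by (unfold K, KK; fold L; lra).
  set (e := exp (2 * K * t)).
  assert (He : 0 < e) by apply exp_pos.
  assert (Hes : forall s, 0 <= s <= t -> exp (2 * K * s) <= e).
  { intros s Hs. apply exp_le_mono. nra. }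
  set (X := fun n => fst (pic p mu a M x0 x1 n)).
  set (V := fun n => snd (pic p mu a M x0 x1 n)).
  set (Xf := Xl p mu a M x0 x1). set (Vf := Vl p mu a M x0 x1).
  assert (Hc : forall s, continuity_pt Xf s /\ continuity_pt Vf s) by (intros; apply contXV; auto).
  assert (Hcn : forall n s, continuity_pt (X n) s /\ continuity_pt (V n) s) by (intros; apply pic_cont).
  assert (Tl : forall n s, 0 <= s <= t -> Rabs (Xf s - X n s) <= 2 * A * (/2)^n * e /\ Rabs (Vf s - V n s) <= 2 * A * (/2)^n * e).
  { intros n s Hs. destruct (tails p mu a M x0 x1 n s Hmu Ha HM ltac:(lra)) as [T1 T2].
    fold A K Xf Vf X V in T1, T2. specialize (Hes s Hs).
    assert (0 <= 2 * A * (/2)^n) by (apply Rmult_le_pos; [lra|apply pow_le; lra]).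
    split; (eapply Rle_trans; [eassumption|]); apply Rmult_le_compat_l; auto. }
  assert (HP : forall n, 0 <= (/2)^n) by (intros; apply pow_le; lra).
  split.
  - apply Rminus_diag_uniq. apply Rabs_eq_0.
    apply (zero_geom _ ((A + 2 * t * A) * e)); [apply Rabs_pos| apply Rmult_le_pos; nra|].
    intros n.
    assert (E1 : X (S n) t = prim x0 (fun s => cl M (V n s)) t) by reflexivity.
    destruct (Tl (S n) t ltac:(lra)) as [T1 _].
    assert (E2 : Rabs (RInt (fun s => cl M (V n s)) 0 t - RInt (fun s => cl M (Vf s)) 0 t) <= (t - 0) * (2 * A * (/2)^n * e)).
    { rewrite <- RInt_minus_R.
      - apply abs_RInt_le_const; auto.
        + apply exR. intros s. apply continuity_pt_minus; apply (continuity_pt_comp _ (cl M)); try apply cl_cont; try apply Hc; apply Hcn.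
        + intros s Hs. eapply Rle_trans; [apply cl_lip|]. rewrite Rabs_minus_sym. apply Tl; auto.
      - apply exR. intros s. apply (continuity_pt_comp _ (cl M)); [apply Hcn|apply cl_cont].
      - apply exR. intros s. apply (continuity_pt_comp _ (cl M)); [apply Hc|apply cl_cont]. }
    unfold prim in *. simpl pow in T1.
    pose proof (Rabs_triang (Xf t - X (S n) t) (X (S n) t - (x0 + RInt (fun s => cl M (Vf s)) 0 t))).
    rewrite E1 in H. 
    replace (x0 + RInt (fun s => cl M (V n s)) 0 t - (x0 + RInt (fun s => cl M (Vf s)) 0 t)) with
      (RInt (fun s => cl M (V n s)) 0 t - RInt (fun s => cl M (Vf s)) 0 t) in H by ring.
    rewrite E1 in T1.
    replace (Xf t - (x0 + RInt (fun s => cl M (V n s)) 0 t) + (RInt (fun s => cl M (V n s)) 0 t - RInt (fun s => cl M (Vf s)) 0 t))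
      with (Xf t - (x0 + RInt (fun s => cl M (Vf s)) 0 t)) in H by ring.
    assert (Rabs (Xf t - (x0 + RInt (fun s : R => cl M (Vf s)) 0 t)) <= A * (/2)^n * e + t * (2 * A * (/2)^n * e)) by lra.
    replace ((A + 2 * t * A) * e * (/2)^n) with (A * (/2)^n * e + t * (2 * A * (/2)^n * e)) by ring. exact H0.
  - apply Rminus_diag_uniq. apply Rabs_eq_0.
    apply (zero_geom _ ((A + 4 * t * L * A) * e)); [apply Rabs_pos| apply Rmult_le_pos; [assert (0 <= t * L * A) by (repeat apply Rmult_le_pos; lra); lra|lra]|].
    intros n.
    assert (E1 : V (S n) t = prim x1 (fun s => Gf p mu a M (X n s) (V n s)) t) by reflexivity.
    destruct (Tl (S n) t ltac:(lra)) as [_ T1].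
    assert (E2 : Rabs (RInt (fun s => Gf p mu a M (X n s) (V n s)) 0 t - RInt (fun s => Gf p mu a M (Xf s) (Vf s)) 0 t)
       <= (t - 0) * (L * (4 * A * (/2)^n * e))).
    { rewrite <- RInt_minus_R.
      - apply abs_RInt_le_const; auto.
        + apply exR. intros s. apply continuity_pt_minus; apply Gf_cont; try apply Hc; apply Hcn.
        + intros s Hs. eapply Rle_trans; [apply Gf_lip; auto|]. fold (LL p mu a M) L.
          apply Rmult_le_compat_l; auto.
          destruct (Tl n s Hs) as [U1 U2]. rewrite Rabs_minus_sym in U1, U2. lra.
      - apply exR. intros s. apply Gf_cont; apply Hcn.
      - apply exR. intros s. apply Gf_cont; apply Hc. }
    unfold prim in *. simpl pow in T1.
    pose proof (Rabs_triang (Vf t - V (S n) t) (V (S n) t - (x1 + RInt (fun s => Gf p mu a M (Xf s) (Vf s)) 0 t))).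
    rewrite E1 in H, T1.
    replace (x1 + RInt (fun s => Gf p mu a M (X n s) (V n s)) 0 t - (x1 + RInt (fun s => Gf p mu a M (Xf s) (Vf s)) 0 t)) with
      (RInt (fun s => Gf p mu a M (X n s) (V n s)) 0 t - RInt (fun s => Gf p mu a M (Xf s) (Vf s)) 0 t) in H by ring.
    replace (Vf t - (x1 + RInt (fun s => Gf p mu a M (X n s) (V n s)) 0 t) + (RInt (fun s => Gf p mu a M (X n s) (V n s)) 0 t - RInt (fun s => Gf p mu a M (Xf s) (Vf s)) 0 t))
      with (Vf t - (x1 + RInt (fun s => Gf p mu a M (Xf s) (Vf s)) 0 t)) in H by ring.
    replace ((A + 4 * t * L * A) * e * (/2)^n) with (A * (/2)^n * e + t * (L * (4 * A * (/2)^n * e))) by ring.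
    lra.
Qed.

Lemma cont_eps (g : R -> R) s eps : continuity_pt g s -> 0 < eps ->
  exists d, 0 < d /\ forall r, Rabs (r - s) < d -> Rabs (g r - g s) < eps.
Proof.
  intros Hc He. destruct (Hc eps He) as [d [Hd H]]. exists d. split; auto.
  intros r Hr. destruct (Req_dec r s) as [->|Hne].
  - rewrite Rminus_diag, Rabs_R0; auto.
  - apply (H r). split; [split; [exact I|auto]|]. exact Hr.
Qed.

Lemma cont_ind (g : R -> R) K' M : (forall s, continuity_pt g s) -> K' < M -> g 0 <= K' ->
  (forall t, 0 <= t -> (forall s, 0 <= s <= t -> g s <= M) -> g t <= K') ->
  forall t, 0 <= t -> g t <= K'.
Proof.
  intros Hc HKM H0 Hind.
  assert (Main : forall t, 0 <= t -> g t <= M).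
  { intros t1 Ht1. destruct (Rle_dec (g t1) M) as [|Hgt]; auto. exfalso.
    set (E := fun s => 0 <= s <= t1 /\ forall r, 0 <= r <= s -> g r <= M).
    assert (Hb : bound E) by (exists t1; intros s [Hs _]; lra).
    assert (Hne : exists s, E s) by (exists 0; split; [lra|intros r Hr; replace r with 0 by lra; lra]).
    destruct (completeness E Hb Hne) as [ss [Hub Hlub]].
    assert (Hss0 : 0 <= ss) by (apply Hub; destruct Hne as [s Hs]; split; [lra|]; intros r Hr; replace r with 0 by lra; lra).
    assert (Hss1 : ss <= t1) by (apply Hlub; intros s [Hs _]; lra).
    assert (C1 : forall r, 0 <= r < ss -> g r <= M).
    { intros r Hr. destruct (Rle_dec (g r) M) as [|Hn]; auto. exfalso.
      assert (ss <= r); [|lra]. apply Hlub. intros s [Hs Hs2].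
      destruct (Rle_dec s r) as [|Hsr]; auto. exfalso. apply Hn, Hs2. lra. }
    assert (C2 : g ss <= M).
    { destruct (Rle_dec (g ss) M) as [|Hn]; auto. exfalso.
      destruct (cont_eps g ss (g ss - M) (Hc ss) ltac:(lra)) as [d [Hd Hg]].
      destruct (Req_dec ss 0) as [Hz|Hz].
      - rewrite Hz in Hn. lra.
      - set (r := Rmax 0 (ss - d / 2)).
        assert (Hr : 0 <= r < ss /\ Rabs (r - ss) < d).
        { unfold r, Rmax. destruct Rle_dec; split; try split; try lra; unfold Rabs; destruct Rcase_abs; lra. }
        specialize (Hg r (proj2 Hr)). specialize (C1 r (proj1 Hr)).
        apply Rabs_def2 in Hg. lra. }
    assert (C3 : g ss <= K').
    { apply Hind; auto. intros s Hs. destruct (Req_dec s ss) as [->|]; auto. apply C1; lra. }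
    assert (Hlt : ss < t1) by (destruct (Req_dec ss t1) as [->|]; lra).
    destruct (cont_eps g ss (M - K') (Hc ss) ltac:(lra)) as [d [Hd Hg]].
    set (s' := Rmin t1 (ss + d / 2)).
    assert (Es : E s').
    { split; [unfold s', Rmin; destruct Rle_dec; lra|].
      intros r Hr. destruct (Rlt_dec r ss) as [Hrs|Hrs]; [apply C1; lra|].
      assert (Rabs (r - ss) < d) by (unfold s', Rmin in Hr; destruct Rle_dec; unfold Rabs; destruct Rcase_abs; lra).
      specialize (Hg r H). apply Rabs_def2 in Hg. lra. }
    specialize (Hub s' Es). unfold s', Rmin in Hub. destruct Rle_dec; lra. }
  intros t Ht. apply Hind; auto. intros s Hs. apply Main. lra.
Qed.

Lemma even_pow_nonneg p x : Nat.Odd p -> 0 <= x ^ (p + 1).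
Proof.
  intros [k ->]. replace (2 * k + 1 + 1)%nat with (2 * (k + 1))%nat by lia.
  rewrite pow_mult. apply pow_le. nra.
Qed.

Lemma pow_abs_even p x : Nat.Odd p -> x ^ (p + 1) = Rabs x ^ (p + 1).
Proof.
  intros Hp. rewrite RPow_abs. rewrite Rabs_right; auto. apply Rle_ge, even_pow_nonneg; auto.
Qed.

Definition En p a (x v : R) := v ^ 2 / 2 + a * x ^ (p + 1) / INR (p + 1).

Lemma En_bound p a x v E0 : Nat.Odd p -> 0 < a -> 0 <= E0 -> En p a x v <= E0 ->
  Rabs x <= 1 + 2 * E0 + INR (p + 1) * E0 / a /\ Rabs v <= 1 + 2 * E0 + INR (p + 1) * E0 / a.
Proof.
  intros Hp Ha HE H. unfold En in H.
  assert (Hn : 0 < INR (p + 1)) by (apply lt_0_INR; lia).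
  pose proof (even_pow_nonneg p x Hp) as Hx.
  assert (H1 : 0 <= a * x ^ (p + 1) / INR (p + 1)) by (apply Rdiv_le_0_compat; [apply Rmult_le_pos; lra|lra]).
  assert (H2 : 0 <= v ^ 2 / 2) by (apply Rdiv_le_0_compat; [apply pow2_ge_0|lra]).
  assert (H3 : 0 <= INR (p + 1) * E0 / a) by (apply Rdiv_le_0_compat; [apply Rmult_le_pos; lra|lra]).
  split.
  - destruct (Rle_dec (Rabs x) 1) as [|Hx1]; [lra|].
    assert (Rabs x <= Rabs x ^ (p + 1)).
    { rewrite <- (pow_1 (Rabs x)) at 1. apply Rle_pow; [lra|lia]. }
    rewrite <- pow_abs_even in H0 by auto.
    assert (x ^ (p + 1) <= INR (p + 1) * E0 / a).
    { assert (a * x ^ (p + 1) / INR (p + 1) <= E0) by lra.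
      apply (Rmult_le_reg_l a); auto. unfold Rdiv in *.
      apply (Rmult_le_reg_r (/ INR (p + 1))); [apply Rinv_0_lt_compat; auto|].
      replace (a * (INR (p + 1) * E0 * / a) * / INR (p + 1)) with E0 by (field; lra). lra. }
    lra.
  - destruct (Rle_dec (Rabs v) 1) as [|Hv1]; [lra|].
    assert (Rabs v <= v ^ 2).
    { rewrite <- Rsqr_pow2, Rsqr_abs. unfold Rsqr. nra. }
    lra.
Qed.

Lemma En_der p a (x v : R -> R) dx dv s : is_derive x s dx -> is_derive v s dv ->
  is_derive (fun s => En p a (x s) (v s)) s (v s * dv + a * x s ^ p * dx).
Proof.
  intros Hx Hv. unfold En.
  auto_derive.
  - split; [exists dv; auto|]. split; [exists dx; auto|]. auto.
  - replace (Derive (fun x0 : R => x x0) s) with dx by (symmetry; apply is_derive_unique; exact Hx).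
    replace (Derive (fun x0 : R => v x0) s) with dv by (symmetry; apply is_derive_unique; exact Hv).
    assert (INR (p + 1) <> 0) by (apply not_0_INR; lia).
    replace (Init.Nat.pred (p + 1)) with p by lia. field. auto.
Qed.

Lemma abs_cont (f : R -> R) s : continuity_pt f s -> continuity_pt (fun r => Rabs (f r)) s.
Proof. intros H. apply (continuity_pt_comp f Rabs); auto. apply Rcontinuity_abs. Qed.

Lemma En_cont p a (x v : R -> R) s : continuity_pt x s -> continuity_pt v s ->
  continuity_pt (fun s => En p a (x s) (v s)) s.
Proof.
  intros Hx Hv. unfold En, Rdiv.
  apply (continuity_pt_plus (fun s => v s ^ 2 * / 2) (fun s => a * x s ^ (p + 1) * / INR (p + 1))).
  - apply (continuity_pt_mult (fun s => v s ^ 2) (fun _ => / 2)).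
    + apply pow_cont; auto.
    + apply continuity_pt_const. intros ? ?; auto.
  - apply (continuity_pt_mult (fun s => a * x s ^ (p + 1)) (fun _ => / INR (p + 1))).
    + apply (continuity_pt_mult (fun _ => a) (fun s => x s ^ (p + 1))).
      * apply continuity_pt_const. intros ? ?; auto.
      * apply pow_cont; auto.
    + apply continuity_pt_const. intros ? ?; auto.
Qed.

Lemma energy_dec p mu a (x v dx dv : R -> R) t : 0 <= mu -> 0 <= t ->
  (forall s, 0 < s < t -> is_derive x s (dx s) /\ is_derive v s (dv s)) ->
  (forall s, 0 <= s <= t -> continuity_pt x s /\ continuity_pt v s) ->
  (forall s, 0 < s < t -> dx s = v s /\ dv s = - mu * v s - a * x s ^ p) ->
  En p a (x t) (v t) <= En p a (x 0) (v 0).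
Proof.
  intros Hmu Ht Hd Hc He.
  assert (H : (fun s => 0 - En p a (x s) (v s)) 0 <= (fun s => 0 - En p a (x s) (v s)) t).
  { apply (mono_MVT (fun s => 0 - En p a (x s) (v s)) (fun s => 0 - (v s * dv s + a * x s ^ p * dx s)) 0 t); auto.
    - intros s Hs. apply der_minus; [apply der_const|]. apply En_der; apply Hd; auto.
    - intros s Hs. apply continuity_pt_minus; [apply continuity_pt_const; intros ? ?; auto|].
      apply En_cont; apply Hc; auto.
    - intros s Hs. destruct (He s Hs) as [E1 E2]. rewrite E1, E2.
      replace (0 - (v s * (- mu * v s - a * x s ^ p) + a * x s ^ p * v s)) with (mu * (v s * v s)) by ring.
      apply Rmult_le_pos; auto. nra. }
  simpl in H. lra.
Qed.

Lemma Gf_id p mu a M x v : Rabs x <= M -> Rabs v <= M -> Gf p mu a M x v = - mu * v - a * x ^ p.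
Proof. intros. unfold Gf. rewrite !cl_id; auto. Qed.

Definition K0 p a x0 x1 := 1 + 2 * En p a x0 x1 + INR (p + 1) * En p a x0 x1 / a.

Lemma En_nonneg p a x v : Nat.Odd p -> 0 <= a -> 0 <= En p a x v.
Proof.
  intros Hp Ha. unfold En.
  assert (0 < INR (p + 1)) by (apply lt_0_INR; lia).
  pose proof (even_pow_nonneg p x Hp).
  assert (0 <= a * x ^ (p + 1) / INR (p + 1)) by (apply Rdiv_le_0_compat; [apply Rmult_le_pos; lra|lra]).
  assert (0 <= v ^ 2 / 2) by (apply Rdiv_le_0_compat; [apply pow2_ge_0|lra]). lra.
Qed.

Lemma trunc_bound p mu a x0 x1 (x v dx dv : R -> R) : Nat.Odd p -> 0 <= mu -> 0 < a ->
  (forall s, is_derive x s (dx s) /\ is_derive v s (dv s)) ->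
  (forall s, 0 <= s -> dx s = cl (2 * K0 p a x0 x1 + 1) (v s) /\
                       dv s = Gf p mu a (2 * K0 p a x0 x1 + 1) (x s) (v s)) ->
  x 0 = x0 -> v 0 = x1 ->
  forall t, 0 <= t -> Rabs (x t) <= 2 * K0 p a x0 x1 /\ Rabs (v t) <= 2 * K0 p a x0 x1.
Proof.
  intros Hp Hmu Ha Hd He Hx0 Hv0.
  set (K := K0 p a x0 x1). set (M := 2 * K + 1).
  set (E0 := En p a x0 x1).
  assert (HE0 : 0 <= E0) by (apply En_nonneg; auto; lra).
  assert (HB : forall t, 0 <= t -> En p a (x t) (v t) <= E0 -> Rabs (x t) <= K /\ Rabs (v t) <= K).
  { intros t Ht H. apply En_bound; auto. }
  assert (Hcont : forall s, continuity_pt x s /\ continuity_pt v s).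
  { intros s. destruct (Hd s). split; eapply deriv_cont; eauto. }
  assert (Main : forall t, 0 <= t -> Rabs (x t) + Rabs (v t) <= 2 * K).
  { apply (cont_ind (fun s => Rabs (x s) + Rabs (v s)) (2 * K) M).
    - intros s. apply (continuity_pt_plus (fun s => Rabs (x s)) (fun s => Rabs (v s))); apply abs_cont; apply Hcont.
    - unfold M. lra.
    - rewrite Hx0, Hv0. destruct (En_bound p a x0 x1 E0 Hp Ha HE0 (Rle_refl _)). cbv beta. unfold K, K0. fold E0. lra.
    - intros t Ht Hind.
      assert (Hen : En p a (x t) (v t) <= E0).
      { unfold E0. rewrite <- Hx0, <- Hv0. apply (energy_dec p mu a x v dx dv t); auto.
        intros s Hs. destruct (He s ltac:(lra)) as [E1 E2].
          specialize (Hind s ltac:(lra)). cbv beta in Hind. unfold M, K in Hind. pose proof (Rabs_pos (x s)). pose proof (Rabs_pos (v s)).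
          rewrite E1, E2. rewrite cl_id by lra. rewrite Gf_id by lra. auto. }
      destruct (HB t Ht Hen). lra. }
  intros t Ht. specialize (Main t Ht). pose proof (Rabs_pos (x t)). pose proof (Rabs_pos (v t)). lra.
Qed.

Lemma exist_sol p mu a x0 x1 : Nat.Odd p -> 0 <= mu -> 0 < a ->
  exists (x v dx dv : R -> R) (B : R),
    (forall s, is_derive x s (dx s) /\ is_derive v s (dv s)) /\
    (forall s, 0 <= s -> dx s = v s /\ dv s = - mu * v s - a * x s ^ p) /\
    x 0 = x0 /\ v 0 = x1 /\
    (forall s, 0 <= s -> Rabs (x s) <= B /\ Rabs (v s) <= B).
Proof.
  intros Hp Hmu Ha.
  set (M := 2 * K0 p a x0 x1 + 1).
  assert (HK : 1 <= K0 p a x0 x1).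
  { unfold K0. pose proof (En_nonneg p a x0 x1 Hp ltac:(lra)).
    assert (0 <= INR (p + 1) * En p a x0 x1 / a) by (apply Rdiv_le_0_compat; [apply Rmult_le_pos; [apply pos_INR|lra]|lra]). lra. }
  assert (HM : 0 <= M) by (unfold M; lra).
  assert (Ha' : 0 <= a) by lra.
  set (Xf := Xl p mu a M x0 x1). set (Vf := Vl p mu a M x0 x1).
  assert (Hc : forall s, continuity_pt Xf s /\ continuity_pt Vf s) by (intros; apply contXV; auto).
  set (xs := prim x0 (fun s => cl M (Vf s))).
  set (vs := prim x1 (fun s => Gf p mu a M (Xf s) (Vf s))).
  set (dx := fun s => cl M (Vf s)). set (dv := fun s => Gf p mu a M (Xf s) (Vf s)).
  assert (Hd : forall s, is_derive xs s (dx s) /\ is_derive vs s (dv s)).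
  { intros s. split.
    - apply prim_derive. intros y. apply (continuity_pt_comp Vf (cl M)); [apply Hc|apply cl_cont].
    - apply prim_derive. intros y. apply Gf_cont; apply Hc. }
  assert (Hid : forall s, 0 <= s -> xs s = Xf s /\ vs s = Vf s).
  { intros s Hs. destruct (ident p mu a M x0 x1 s Hmu Ha' HM Hs) as [E1 E2]. split; symmetry; auto. }
  assert (H0 : xs 0 = x0 /\ vs 0 = x1) by (unfold xs, vs; rewrite !prim_0; auto).
  assert (Hbd : forall t, 0 <= t -> Rabs (xs t) <= 2 * K0 p a x0 x1 /\ Rabs (vs t) <= 2 * K0 p a x0 x1).
  { apply (trunc_bound p mu a x0 x1 xs vs dx dv); auto; try apply H0.
    intros s Hs. destruct (Hid s Hs) as [E1 E2]. unfold dx, dv. rewrite E1, E2. auto. }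
  exists xs, vs, dx, dv, (2 * K0 p a x0 x1).
  split; [auto|]. split; [|split; [apply H0|split; [apply H0|auto]]].
  intros s Hs. destruct (Hid s Hs) as [E1 E2]. destruct (Hbd s Hs) as [B1 B2].
  unfold dx, dv. rewrite <- E1, <- E2. split.
  - apply cl_id. unfold M. lra.
  - apply Gf_id; unfold M; lra.
Qed.

Lemma U1 (f f' : R -> R) t : deriv_nonneg f f' -> 0 < t -> is_derive f t (f' t).
Proof.
  intros H Ht. apply is_derive_Reals. intros eps Heps.
  destruct (H t ltac:(lra) eps Heps) as [d [Hd Hs]].
  exists (mkposreal (Rmin d t) ltac:(apply Rmin_pos; lra)). simpl.
  intros h Hh0 Hh.
  assert (Hm1 : Rmin d t <= d) by apply Rmin_l. assert (Hm2 : Rmin d t <= t) by apply Rmin_r.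
  specialize (Hs (t + h)). replace (t + h - t) with h in Hs by ring.
  apply Hs.
  - apply Rabs_def2 in Hh. lra.
  - intros E. apply Hh0. lra.
  - lra.
Qed.

Lemma U2 (f f' : R -> R) : deriv_nonneg f f' -> cont_nonneg f.
Proof.
  intros H t Ht eps Heps.
  destruct (H t Ht 1 ltac:(lra)) as [d [Hd Hs]].
  set (c := Rabs (f' t) + 1). assert (Hc : 0 < c) by (unfold c; pose proof (Rabs_pos (f' t)); lra).
  exists (Rmin d (eps / c)). split; [apply Rmin_pos; auto; apply Rdiv_lt_0_compat; auto|].
  intros s Hs0 Hst.
  assert (Hm1 : Rmin d (eps / c) <= d) by apply Rmin_l. assert (Hm2 : Rmin d (eps / c) <= eps / c) by apply Rmin_r.
  destruct (Req_dec s t) as [->|Hne]; [rewrite Rminus_diag, Rabs_R0; auto|].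
  specialize (Hs s Hs0 Hne ltac:(lra)).
  assert (Hq : Rabs ((f s - f t) / (s - t)) < c).
  { unfold c. pose proof (Rabs_triang_inv ((f s - f t) / (s - t)) (f' t)). lra. }
  replace (f s - f t) with ((f s - f t) / (s - t) * (s - t)) by (field; lra).
  rewrite Rabs_mult.
  assert (Rabs (s - t) < eps / c) by lra.
  assert (0 < Rabs (s - t)) by (apply Rabs_pos_lt; lra).
  apply (Rle_lt_trans _ (c * Rabs (s - t))).
  - apply Rmult_le_compat_r; lra.
  - replace eps with (c * (eps / c)) by (field; lra). apply Rmult_lt_compat_l; auto.
Qed.

Lemma U3 (f : R -> R) s : cont_nonneg f -> continuity_pt (fun r => f (Rmax 0 r)) s.
Proof.
  intros H eps Heps.
  destruct (H (Rmax 0 s) (Rmax_l 0 s) eps Heps) as [d [Hd Hs]].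
  exists d. split; auto. intros r [_ Hr]. simpl in *. unfold R_dist in *.
  apply Hs; [apply Rmax_l|]. eapply Rle_lt_trans; [apply Rmax0_lip|auto].
Qed.

Lemma U4 (f : R -> R) t l : 0 < t -> is_derive f t l -> is_derive (fun r => f (Rmax 0 r)) t l.
Proof.
  intros Ht H. apply (is_derive_ext_loc f); auto.
  exists (mkposreal t Ht). intros r Hr. cbv [ball] in Hr. simpl in Hr.
  unfold AbsRing_ball, abs, minus, plus, opp in Hr. simpl in Hr.
  apply Rabs_def2 in Hr. rewrite Rmax_right by lra. auto.
Qed.

Lemma gron_ineq a P W U q mu : 0 <= a -> 0 <= P -> 0 <= mu -> Rabs q <= P * Rabs W ->
  - (1 + a * P) * (W ^ 2 + U ^ 2) + 2 * W * U + 2 * U * (- mu * U - a * q) <= 0.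
Proof.
  intros Ha HP Hmu Hq.
  assert (H1 : - (U * q) <= Rabs U * Rabs q).
  { rewrite <- Rabs_mult. pose proof (Rabs_maj2 (U * q)). lra. }
  assert (H2 : Rabs U * Rabs q <= Rabs U * (P * Rabs W)) by (apply Rmult_le_compat_l; auto; apply Rabs_pos).
  assert (H3 : 2 * (Rabs U * Rabs W) <= U ^ 2 + W ^ 2).
  { rewrite <- (pow2_abs U), <- (pow2_abs W). pose proof (pow2_ge_0 (Rabs U - Rabs W)). nra. }
  assert (H4 : 2 * W * U <= W ^ 2 + U ^ 2) by (pose proof (pow2_ge_0 (W - U)); nra).
  assert (H5 : 0 <= mu * U ^ 2) by (apply Rmult_le_pos; auto; apply pow2_ge_0).
  assert (H6 : a * (P * (2 * (Rabs U * Rabs W))) <= a * (P * (U ^ 2 + W ^ 2))).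
  { apply Rmult_le_compat_l; auto. apply Rmult_le_compat_l; auto. }
  assert (H7 : - (a * (U * q)) <= a * (Rabs U * (P * Rabs W))).
  { replace (- (a * (U * q))) with (a * (- (U * q))) by ring. apply Rmult_le_compat_l; auto. lra. }
  replace (a * (Rabs U * (P * Rabs W))) with (a * (P * (Rabs U * Rabs W))) in H7 by ring.
  nra.
Qed.

Lemma uniq p mu a x0 x1 (x v dx dv : R -> R) B (y : R -> R) : Nat.Odd p -> 0 <= mu -> 0 < a ->
  (forall s, is_derive x s (dx s) /\ is_derive v s (dv s)) ->
  (forall s, 0 <= s -> dx s = v s /\ dv s = - mu * v s - a * x s ^ p) ->
  x 0 = x0 -> v 0 = x1 -> (forall s, 0 <= s -> Rabs (x s) <= B /\ Rabs (v s) <= B) ->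
  is_solution p mu a x0 x1 y -> forall t, 0 <= t -> y t = x t.
Proof.
  intros Hp Hmu Ha Hd He Hx0 Hv0 HB Hy.
  destruct Hy as [dy [ddy [Hd1 [Hd2 [Hc [Heq [Hy0 Hdy0]]]]]]].
  set (Y := fun r => y (Rmax 0 r)). set (DY := fun r => dy (Rmax 0 r)). set (DDY := fun r => ddy (Rmax 0 r)).
  assert (HYd : forall s, 0 < s -> is_derive Y s (DY s) /\ is_derive DY s (DDY s)).
  { intros s Hs. unfold DY, DDY. rewrite Rmax_right by lra. split; apply U4; auto; eapply U1; eauto. }
  assert (HYc : forall s, continuity_pt Y s /\ continuity_pt DY s).
  { intros s. split; apply U3; eapply U2; eauto. }
  assert (HYe : forall s, 0 < s -> DDY s = - mu * DY s - a * Y s ^ p).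
  { intros s Hs. unfold DDY, DY, Y. rewrite Rmax_right by lra. specialize (Heq s Hs). lra. }
  assert (HY0 : Y 0 = x0 /\ DY 0 = x1) by (unfold Y, DY; rewrite Rmax_left by lra; auto).
  assert (HYB : forall t, 0 <= t -> Rabs (Y t) <= K0 p a x0 x1 /\ Rabs (DY t) <= K0 p a x0 x1).
  { intros t Ht. apply En_bound; auto. apply En_nonneg; auto; lra.
    destruct HY0 as [E1 E2]. rewrite <- E1, <- E2.
    apply (energy_dec p mu a Y DY DY DDY t); auto.
    - intros s Hs. apply HYd; lra.
    - intros s Hs. split; auto. apply HYe; lra. }
  assert (HB0 : 0 <= B) by (destruct (HB 0 (Rle_refl 0)); pose proof (Rabs_pos (x 0)); lra).
  assert (HK0 : 0 <= K0 p a x0 x1) by (destruct (HYB 0 (Rle_refl 0)); pose proof (Rabs_pos (Y 0)); lra).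
  set (C := B + K0 p a x0 x1).
  set (P := INR p * C ^ pred p).
  assert (HP : 0 <= P) by (unfold P; apply Rmult_le_pos; [apply pos_INR|apply pow_le; unfold C; lra]).
  set (Kh := 1 + a * P).
  set (phi := fun s => exp (- Kh * s) * ((Y s - x s) ^ 2 + (DY s - v s) ^ 2)).
  set (phi' := fun s => exp (- Kh * s) * (- Kh * ((Y s - x s) ^ 2 + (DY s - v s) ^ 2)
                    + 2 * (Y s - x s) * (DY s - dx s) + 2 * (DY s - v s) * (DDY s - dv s))).
  assert (Hphid : forall s, 0 < s -> is_derive phi s (phi' s)).
  { intros s Hs. destruct (HYd s Hs) as [D1 D2]. destruct (Hd s) as [D3 D4].
    unfold phi, phi'. auto_derive.
    - repeat split; eexists; eauto.
    - replace (Derive (fun x0 : R => Y x0) s) with (DY s) by (symmetry; apply is_derive_unique; exact D1).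
      replace (Derive (fun x0 : R => DY x0) s) with (DDY s) by (symmetry; apply is_derive_unique; exact D2).
      replace (Derive (fun x0 : R => x x0) s) with (dx s) by (symmetry; apply is_derive_unique; exact D3).
      replace (Derive (fun x0 : R => v x0) s) with (dv s) by (symmetry; apply is_derive_unique; exact D4).
      ring. }
  intros t Ht.
  assert (Hm : (fun s => 0 - phi s) 0 <= (fun s => 0 - phi s) t).
  { apply (mono_MVT (fun s => 0 - phi s) (fun s => 0 - phi' s) 0 t); auto.
    - intros s Hs. apply der_minus; [apply der_const|apply Hphid; lra].
    - intros s Hs. apply continuity_pt_minus; [apply continuity_pt_const; intros ? ?; auto|].
      unfold phi.
      apply (continuity_pt_mult (fun s => exp (- Kh * s)) (fun s => (Y s - x s) ^ 2 + (DY s - v s) ^ 2)).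
      + apply (continuity_pt_comp (fun s => - Kh * s) exp).
        * apply (continuity_pt_mult (fun _ => - Kh) (fun s => s)); [apply continuity_pt_const; intros ? ?; auto|apply continuity_pt_id].
        * apply derivable_continuous_pt, derivable_pt_exp.
      + destruct (HYc s) as [C1 C2].
        apply (continuity_pt_plus (fun s => (Y s - x s) ^ 2) (fun s => (DY s - v s) ^ 2)); apply pow_cont;
        apply continuity_pt_minus; auto; eapply deriv_cont; apply Hd.
    - intros s Hs. unfold phi'.
      destruct (He s ltac:(lra)) as [E1 E2]. rewrite E1, E2, HYe by lra.
      destruct (HYB s ltac:(lra)) as [B1 B2]. destruct (HB s ltac:(lra)) as [B3 B4].
      pose proof (pow_lip (Y s) (x s) C p ltac:(unfold C; lra) ltac:(unfold C; lra)) as HL.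
      fold P in HL.
      pose proof (gron_ineq a P (Y s - x s) (DY s - v s) (Y s ^ p - x s ^ p) mu ltac:(lra) HP Hmu HL) as G.
      pose proof (exp_pos (- Kh * s)).
      replace (- mu * DY s - a * Y s ^ p - (- mu * v s - a * x s ^ p)) with (- mu * (DY s - v s) - a * (Y s ^ p - x s ^ p)) by ring.
      fold Kh in G. nra. }
  simpl in Hm.
  assert (Hphi0 : phi 0 = 0).
  { unfold phi. destruct HY0 as [E1 E2]. rewrite E1, E2, Hx0, Hv0. ring. }
  rewrite Hphi0 in Hm.
  unfold phi in Hm. pose proof (exp_pos (- Kh * t)).
  pose proof (pow2_ge_0 (Y t - x t)). pose proof (pow2_ge_0 (DY t - v t)).
  assert (Hz : (Y t - x t) ^ 2 = 0) by nra.
  assert (Y t = x t) by nra.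
  unfold Y in H2. rewrite Rmax_right in H2 by lra. auto.
Qed.

Definition HH k mu a (x v : R) := v ^ 2 / 2 + (v + mu * x) ^ 2 / 2 + 2 * a * (x ^ 2) ^ (k + 1) / INR (2 * k + 2).

Lemma pow_p1 k x : x ^ (2 * k + 1 + 1) = (x ^ 2) ^ (k + 1).
Proof. rewrite <- pow_mult. f_equal. lia. Qed.

Lemma HH_der k mu a (x v dx dv : R -> R) s : is_derive x s (dx s) -> is_derive v s (dv s) ->
  dx s = v s -> dv s = - mu * v s - a * x s ^ (2 * k + 1) ->
  is_derive (fun s => HH k mu a (x s) (v s)) s (- mu * (v s ^ 2 + a * (x s ^ 2) ^ (k + 1))).
Proof.
  intros D1 D2 E1 E2. unfold HH.
  assert (Hn : INR (2 * k + 2) <> 0) by (apply not_0_INR; lia).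
  assert (Hpx : (x s ^ 2) ^ (k + 1) = x s ^ (2 * k + 1) * x s).
  { rewrite <- pow_p1. rewrite pow_add. ring. }
  auto_derive.
  - repeat split; eexists; eauto.
  - replace (Derive (fun x0 : R => x x0) s) with (dx s) by (symmetry; apply is_derive_unique; exact D1).
    replace (Derive (fun x0 : R => v x0) s) with (dv s) by (symmetry; apply is_derive_unique; exact D2).
    rewrite E1, E2. replace (Init.Nat.pred 2) with 1%nat by lia.
    replace (Init.Nat.pred (k + 1)) with k by lia.
    assert (Hk : (x s ^ 2) ^ k * (x s * 1) = x s ^ (2 * k + 1)).
    { rewrite pow_add, <- pow_mult. simpl. ring. }
    assert (INR (2 * k + 2) = 2 * (INR k + 1)) by (rewrite plus_INR, mult_INR; simpl; ring).
    rewrite H in *. rewrite Hpx.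
    replace (INR (k + 1)) with (INR k + 1) by (rewrite plus_INR; simpl; ring).
    replace (x s ^ 1) with (x s) by ring.
    rewrite <- Hk.
    replace (INR (k + (k + 0) + 2)) with (2 * (INR k + 1)) by (rewrite <- H; f_equal; lia).
    replace (x s * (x s * 1)) with (x s ^ 2) by ring.
    field. lra.
Qed.

Lemma HH_lower k mu a x v : 0 <= a -> mu ^ 2 * x ^ 2 / 4 <= HH k mu a x v.
Proof.
  intros Ha. unfold HH.
  assert (0 < INR (2 * k + 2)) by (apply lt_0_INR; lia).
  assert (0 <= 2 * a * (x ^ 2) ^ (k + 1) / INR (2 * k + 2)).
  { apply Rdiv_le_0_compat; auto. apply Rmult_le_pos; [lra|]. apply pow_le, pow2_ge_0. }
  assert (0 <= (2 * v + mu * x) ^ 2) by apply pow2_ge_0. nra.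
Qed.

Lemma HH_nonneg k mu a x v : 0 <= a -> 0 <= HH k mu a x v.
Proof. intros Ha. pose proof (HH_lower k mu a x v Ha). assert (0 <= mu ^ 2 * x ^ 2 / 4) by (pose proof (pow2_ge_0 mu); pose proof (pow2_ge_0 x); apply Rdiv_le_0_compat; [nra|lra]). lra. Qed.

Definition Cq k mu a B := (3 / 2 + mu ^ 2 + a * (B ^ 2) ^ k) ^ (k + 1) * 2 ^ (k + 1) * ((B ^ 2) ^ k + / a).

Lemma Cq_pos k mu a B : 0 < a -> 0 < Cq k mu a B.
Proof.
  intros Ha. unfold Cq.
  assert (0 <= a * (B ^ 2) ^ k) by (apply Rmult_le_pos; [lra|apply pow_le, pow2_ge_0]).
  pose proof (pow2_ge_0 mu). pose proof (pow_le (B ^ 2) k (pow2_ge_0 B)).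
  pose proof (Rinv_0_lt_compat a Ha).
  repeat apply Rmult_lt_0_compat; try apply pow_lt; lra.
Qed.

Lemma HH_upper k mu a x v B : 0 < a -> 0 <= mu -> Rabs x <= B -> Rabs v <= B ->
  HH k mu a x v ^ (k + 1) <= Cq k mu a B * (v ^ 2 + a * (x ^ 2) ^ (k + 1)).
Proof.
  intros Ha Hmu Hx Hv.
  set (u := v ^ 2). set (w := x ^ 2).
  assert (Hu : 0 <= u <= B ^ 2).
  { unfold u. split; [apply pow2_ge_0|]. rewrite <- (pow2_abs v). apply pow_incr. split; [apply Rabs_pos|auto]. }
  assert (Hw : 0 <= w <= B ^ 2).
  { unfold w. split; [apply pow2_ge_0|]. rewrite <- (pow2_abs x). apply pow_incr. split; [apply Rabs_pos|auto]. }
  set (Bk := (B ^ 2) ^ k).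
  assert (HBk : 0 <= Bk) by (apply pow_le; lra).
  assert (Hwk : w ^ (k + 1) <= Bk * w).
  { rewrite pow_add, pow_1. apply Rmult_le_compat_r; [lra|]. apply pow_incr; lra. }
  assert (Huk : u ^ (k + 1) <= Bk * u).
  { rewrite pow_add, pow_1. apply Rmult_le_compat_r; [lra|]. apply pow_incr; lra. }
  set (A1 := 3 / 2 + mu ^ 2 + a * Bk).
  assert (h1 : HH k mu a x v <= A1 * (u + w)).
  { unfold HH. fold u w.
    assert (Hn : 2 <= INR (2 * k + 2)) by (replace 2 with (INR 2) at 1 by (simpl; ring); apply le_INR; lia).
    assert (0 <= w ^ (k + 1)) by (apply pow_le; lra).
    assert (2 * a * w ^ (k + 1) / INR (2 * k + 2) <= a * w ^ (k + 1)).
    { apply (Rmult_le_reg_r (INR (2 * k + 2))); [lra|]. unfold Rdiv.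
      replace (2 * a * w ^ (k + 1) * / INR (2 * k + 2) * INR (2 * k + 2)) with (2 * a * w ^ (k + 1)) by (field; lra).
      assert (0 <= a * w ^ (k + 1) * (INR (2 * k + 2) - 2)) by (apply Rmult_le_pos; [apply Rmult_le_pos; lra | lra]).
      lra. }
    assert ((v + mu * x) ^ 2 <= 2 * u + 2 * mu ^ 2 * w) by (unfold u, w; pose proof (pow2_ge_0 (v - mu * x)); nra).
    assert (a * w ^ (k + 1) <= a * (Bk * w)) by (apply Rmult_le_compat_l; lra).
    assert (0 <= mu ^ 2 * u) by (apply Rmult_le_pos; [apply pow2_ge_0|lra]).
    assert (0 <= a * Bk * u) by (apply Rmult_le_pos; [apply Rmult_le_pos|]; lra).
    unfold A1. lra. }
  assert (HA1 : 0 <= A1) by (unfold A1; pose proof (pow2_ge_0 mu); assert (0 <= a * Bk) by (apply Rmult_le_pos; lra); lra).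
  assert (h2 : HH k mu a x v ^ (k + 1) <= A1 ^ (k + 1) * (u + w) ^ (k + 1)).
  { rewrite <- Rpow_mult_distr. apply pow_incr. split; auto. apply HH_nonneg; lra. }
  assert (h3 : (u + w) ^ (k + 1) <= 2 ^ (k + 1) * (u ^ (k + 1) + w ^ (k + 1))).
  { assert (u + w <= 2 * Rmax u w) by (unfold Rmax; destruct Rle_dec; lra).
    eapply Rle_trans; [apply pow_incr; split; [lra|exact H]|].
    rewrite Rpow_mult_distr. apply Rmult_le_compat_l; [apply pow_le; lra|].
    pose proof (pow_le u (k + 1) ltac:(lra)). pose proof (pow_le w (k + 1) ltac:(lra)).
    unfold Rmax; destruct Rle_dec; lra. }
  assert (h4 : u ^ (k + 1) + w ^ (k + 1) <= (Bk + / a) * (u + a * w ^ (k + 1))).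
  { assert (0 <= w ^ (k + 1)) by (apply pow_le; lra).
    assert (/ a * (a * w ^ (k + 1)) = w ^ (k + 1)) by (field; lra).
    assert (0 <= / a * u) by (apply Rmult_le_pos; [apply Rlt_le, Rinv_0_lt_compat; auto|lra]).
    assert (0 <= Bk * (a * w ^ (k + 1))) by (apply Rmult_le_pos; [lra|apply Rmult_le_pos; lra]).
    nra. }
  unfold Cq. fold Bk. fold A1. fold u w.
  assert (0 <= A1 ^ (k + 1)) by (apply pow_le; auto).
  assert (0 <= 2 ^ (k + 1)) by (apply pow_le; lra).
  assert (A1 ^ (k + 1) * (u + w) ^ (k + 1) <= A1 ^ (k + 1) * (2 ^ (k + 1) * (u ^ (k + 1) + w ^ (k + 1))))
    by (apply Rmult_le_compat_l; auto).
  assert (2 ^ (k + 1) * (u ^ (k + 1) + w ^ (k + 1)) <= 2 ^ (k + 1) * ((Bk + / a) * (u + a * w ^ (k + 1))))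
    by (apply Rmult_le_compat_l; auto).
  assert (A1 ^ (k + 1) * (2 ^ (k + 1) * (u ^ (k + 1) + w ^ (k + 1))) <= A1 ^ (k + 1) * (2 ^ (k + 1) * ((Bk + / a) * (u + a * w ^ (k + 1)))))
    by (apply Rmult_le_compat_l; auto).
  replace (A1 ^ (k + 1) * 2 ^ (k + 1) * (Bk + / a) * (u + a * w ^ (k + 1))) with
    (A1 ^ (k + 1) * (2 ^ (k + 1) * ((Bk + / a) * (u + a * w ^ (k + 1))))) by ring.
  lra.
Qed.

Lemma psi_der (Hf : R -> R) dH k c s : is_derive Hf s dH -> Hf s <> 0 ->
  is_derive (fun s => / Hf s ^ k - c * s) s (- (INR k * dH * Hf s ^ pred k) / (Hf s ^ k) ^ 2 - c).
Proof.
  intros D Hn. assert (Hk : Hf s ^ k <> 0) by (apply pow_nonzero; auto).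
  auto_derive.
  - split; [eexists; eauto|]. split; auto.
  - replace (Derive (fun x0 : R => Hf x0) s) with dH by (symmetry; apply is_derive_unique; exact D).
    field. auto.
Qed.

Lemma decay k mu a (x v dx dv : R -> R) B : (1 <= k)%nat -> 0 < mu -> 0 < a ->
  (forall s, is_derive x s (dx s) /\ is_derive v s (dv s)) ->
  (forall s, 0 <= s -> dx s = v s /\ dv s = - mu * v s - a * x s ^ (2 * k + 1)) ->
  (forall s, 0 <= s -> Rabs (x s) <= B /\ Rabs (v s) <= B) ->
  exists D, 0 < D /\ forall t, 0 < t -> (x t ^ 2) ^ k <= D / t.
Proof.
  intros Hk Hmu Ha Hd He HB.
  set (Hf := fun s => HH k mu a (x s) (v s)).
  set (Q := fun s => v s ^ 2 + a * (x s ^ 2) ^ (k + 1)).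
  assert (HQ : forall s, 0 <= Q s).
  { intros s. unfold Q. pose proof (pow2_ge_0 (v s)).
    assert (0 <= a * (x s ^ 2) ^ (k + 1)) by (apply Rmult_le_pos; [lra|apply pow_le, pow2_ge_0]). lra. }
  assert (HHd : forall s, 0 <= s -> is_derive Hf s (- mu * Q s)).
  { intros s Hs. destruct (Hd s). destruct (He s Hs). unfold Hf, Q. apply (HH_der k mu a x v dx dv); auto. }
  assert (Hc : forall s, 0 <= s -> continuity_pt Hf s).
  { intros s Hs. eapply deriv_cont. apply HHd; auto. }
  assert (Hmono : forall s t, 0 <= s <= t -> Hf t <= Hf s).
  { intros s t Hst.
    assert (H : (fun r => 0 - Hf r) s <= (fun r => 0 - Hf r) t).
    { apply (mono_MVT (fun r => 0 - Hf r) (fun r => 0 - - mu * Q r) s t); try lra.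
      - intros r Hr. apply der_minus; [apply der_const|apply HHd; lra].
      - intros r Hr. apply continuity_pt_minus; [apply continuity_pt_const; intros ? ?; auto|apply Hc; lra].
      - intros r Hr. pose proof (HQ r). nra. }
    simpl in H. lra. }
  assert (HHnn : forall s, 0 <= Hf s) by (intros; apply HH_nonneg; lra).
  set (C := Cq k mu a B). assert (HC : 0 < C) by (apply Cq_pos; auto).
  assert (HkR : 1 <= INR k) by (replace 1 with (INR 1) by auto; apply le_INR; auto).
  set (c := INR k * mu / C).
  assert (Hcp : 0 < c) by (unfold c; apply Rdiv_lt_0_compat; [nra|auto]).
  set (m4 := 4 / mu ^ 2).
  assert (Hm4 : 0 < m4) by (unfold m4; apply Rdiv_lt_0_compat; [lra|apply pow_lt; auto]).
  exists (m4 ^ k / c). split; [apply Rdiv_lt_0_compat; [apply pow_lt; auto|auto]|].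
  intros t Ht.
  assert (Hx2 : x t ^ 2 <= m4 * Hf t).
  { pose proof (HH_lower k mu a (x t) (v t) ltac:(lra)). fold (Hf t) in H.
    unfold m4. apply (Rmult_le_reg_l (mu ^ 2 / 4)); [apply Rdiv_lt_0_compat; [apply pow_lt|]; lra|].
    replace (mu ^ 2 / 4 * (4 / mu ^ 2 * Hf t)) with (Hf t) by (field; lra). lra. }
  assert (Hx2k : (x t ^ 2) ^ k <= m4 ^ k * Hf t ^ k).
  { rewrite <- Rpow_mult_distr. apply pow_incr. split; [apply pow2_ge_0|auto]. }
  destruct (Req_dec (Hf t) 0) as [Hz|Hnz].
  - rewrite Hz, pow_i in Hx2k by lia. rewrite Rmult_0_r in Hx2k.
    assert (0 <= m4 ^ k / c / t) by (apply Rdiv_le_0_compat; [apply Rdiv_le_0_compat; [apply pow_le|]|]; lra).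
    unfold Rdiv in *. lra.
  - assert (Hpos : 0 < Hf t) by (pose proof (HHnn t); lra).
    assert (Hps : forall s, 0 <= s <= t -> 0 < Hf s) by (intros s Hs; specialize (Hmono s t Hs); lra).
    set (psi := fun s => / Hf s ^ k - c * s).
    assert (Hpsi : psi 0 <= psi t).
    { apply (mono_MVT psi (fun s => - (INR k * (- mu * Q s) * Hf s ^ pred k) / (Hf s ^ k) ^ 2 - c) 0 t); try lra.
      - intros s Hs. apply psi_der; [apply HHd; lra|]. specialize (Hps s ltac:(lra)). lra.
      - intros s Hs. eapply deriv_cont. apply psi_der; [apply HHd; lra|]. specialize (Hps s Hs). lra.
      - intros s Hs. specialize (Hps s ltac:(lra)).
        destruct (HB s ltac:(lra)) as [B1 B2].
        pose proof (HH_upper k mu a (x s) (v s) B Ha ltac:(lra) B1 B2) as HU. fold (Hf s) (Q s) C in HU.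
        assert (E : (Hf s ^ k) ^ 2 = Hf s ^ pred k * Hf s ^ (k + 1)).
        { rewrite <- !pow_add, <- pow_mult. f_equal. lia. }
        assert (Hpk : 0 < Hf s ^ pred k) by (apply pow_lt; auto).
        assert (Hk1 : 0 < Hf s ^ (k + 1)) by (apply pow_lt; auto).
        rewrite E.
        replace (- (INR k * (- mu * Q s) * Hf s ^ pred k) / (Hf s ^ pred k * Hf s ^ (k + 1)) - c)
          with ((INR k * mu * Q s - c * Hf s ^ (k + 1)) / Hf s ^ (k + 1)) by (field; lra).
        apply Rdiv_le_0_compat; [|lra].
        unfold c. assert (INR k * mu / C * Hf s ^ (k + 1) <= INR k * mu / C * (C * Q s)).
        { apply Rmult_le_compat_l; auto. apply Rlt_le, Rdiv_lt_0_compat; [nra|auto]. }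
        replace (INR k * mu / C * (C * Q s)) with (INR k * mu * Q s) in H by (field; lra). lra. }
    unfold psi in Hpsi.
    assert (0 < / Hf 0 ^ k) by (apply Rinv_0_lt_compat, pow_lt, Hps; lra).
    rewrite Rmult_0_r in Hpsi.
    assert (Hi : c * t <= / Hf t ^ k) by lra.
    assert (Hfk : 0 < Hf t ^ k) by (apply pow_lt; auto).
    assert (Hft : Hf t ^ k <= / (c * t)).
    { apply (Rmult_le_reg_l (c * t)); [nra|]. rewrite Rinv_r by nra.
      apply (Rmult_le_reg_r (/ Hf t ^ k)); [apply Rinv_0_lt_compat; auto|].
      rewrite Rmult_assoc, Rinv_r, Rmult_1_r, Rmult_1_l by lra. auto. }
    eapply Rle_trans; [exact Hx2k|].
    replace (m4 ^ k / c / t) with (m4 ^ k * / (c * t)) by (field; lra).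
    apply Rmult_le_compat_l; [apply pow_le; lra|auto].
Qed.

Lemma V1 (f f' : R -> R) : (forall t, 0 <= t -> is_derive f t (f' t)) -> deriv_nonneg f f'.
Proof.
  intros H t Ht eps Heps. specialize (H t Ht). apply is_derive_Reals in H.
  destruct (H eps Heps) as [d Hd]. exists d. split; [apply cond_pos|].
  intros s Hs Hst Hsd. specialize (Hd (s - t) ltac:(lra) Hsd).
  replace (t + (s - t)) with s in Hd by ring. exact Hd.
Qed.

Lemma V2 (g : R -> R) : (forall t, continuity_pt g t) -> cont_nonneg g.
Proof.
  intros H t Ht eps Heps. destruct (cont_eps g t eps (H t) Heps) as [d [Hd Hg]].
  exists d. split; auto.
Qed.

Lemma rpow_bound (y D t : R) k : (1 <= k)%nat -> 0 < D -> 0 < t -> (y ^ 2) ^ k <= D / t ->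
  Rabs y <= Rpower D (1 / (2 * INR k)) * Rpower t (- (1 / (2 * INR k))).
Proof.
  intros Hk HD Ht H.
  set (e := 1 / (2 * INR k)).
  assert (HkR : 1 <= INR k) by (replace 1 with (INR 1) by auto; apply le_INR; auto).
  assert (He : 0 < e) by (unfold e; apply Rdiv_lt_0_compat; lra).
  assert (Hr : Rpower D e * Rpower t (- e) = Rpower (D / t) e).
  { unfold Rpower. rewrite <- exp_plus. f_equal. unfold Rdiv.
    rewrite ln_mult, ln_Rinv by (try apply Rinv_0_lt_compat; auto). ring. }
  rewrite Hr.
  destruct (Req_dec y 0) as [->|Hy].
  - rewrite Rabs_R0. unfold Rpower. apply Rlt_le, exp_pos.
  - assert (Hay : 0 < Rabs y) by (apply Rabs_pos_lt; auto).
    assert (E : Rabs y = Rpower ((y ^ 2) ^ k) e).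
    { rewrite <- pow2_abs, <- pow_mult. unfold Rpower. rewrite ln_pow by auto.
      rewrite <- (exp_ln (Rabs y)) at 1 by auto. f_equal. unfold e. rewrite mult_INR. simpl INR.
      field. lra. }
    rewrite E. apply Rle_Rpower_l; [lra|]. split; auto.
    apply pow_lt. rewrite <- pow2_abs. apply pow_lt. auto.
Qed.

Theorem theorem1 (p : nat) (mu alpha : R)
  (hp : (3 <= p)%nat) (hodd : Nat.Odd p) (hmu : 0 <= mu) (halpha : 0 < alpha)
  (x0 x1 : R) :
  exists x : R -> R,
    is_solution p mu alpha x0 x1 x /\
    (forall y : R -> R, is_solution p mu alpha x0 x1 y ->
       forall t, 0 <= t -> y t = x t) /\
    (0 < mu -> exists Cstar, 0 < Cstar /\
       forall t, 0 < t -> Rabs (x t) <= Cstar * Rpower t (- (1 / (INR p - 1)))).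
Proof.
  destruct (exist_sol p mu alpha x0 x1 hodd hmu halpha) as [x [v [dx [dv [B [Hd [He [Hx0 [Hv0 HB]]]]]]]]].
  exists x. split; [|split].
  - exists v, (fun s => - mu * v s - alpha * x s ^ p).
    assert (Hc : forall s, continuity_pt x s /\ continuity_pt v s).
    { intros s. destruct (Hd s). split; eapply deriv_cont; eauto. }
    split; [|split; [|split; [|split; [|split]]]]; auto.
    + apply V1. intros t Ht. destruct (Hd t) as [D _]. destruct (He t Ht) as [E _]. rewrite <- E. auto.
    + apply V1. intros t Ht. destruct (Hd t) as [_ D]. destruct (He t Ht) as [_ E]. rewrite <- E. auto.
    + apply V2. intros t. destruct (Hc t) as [C1 C2].
      apply (continuity_pt_minus (fun s => - mu * v s) (fun s => alpha * x s ^ p)).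
      * apply (continuity_pt_mult (fun _ => - mu) v); auto. apply continuity_pt_const; intros ? ?; auto.
      * apply (continuity_pt_mult (fun _ => alpha) (fun s => x s ^ p)); [apply continuity_pt_const; intros ? ?; auto|].
        apply pow_cont; auto.
    + intros t Ht. ring.
  - intros y Hy. apply (uniq p mu alpha x0 x1 x v dx dv B y); auto.
  - intros Hmu. destruct hodd as [k Hk].
    assert (Hk1 : (1 <= k)%nat) by lia.
    subst p.
    destruct (decay k mu alpha x v dx dv B Hk1 Hmu halpha Hd He HB) as [D [HD Hdec]].
    assert (Hp : INR (2 * k + 1) - 1 = 2 * INR k) by (rewrite plus_INR, mult_INR; simpl; ring).
    rewrite Hp.
    exists (Rpower D (1 / (2 * INR k))). split; [unfold Rpower; apply exp_pos|].
    intros t Ht. apply rpow_bound; auto.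
Qed.
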